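(* For each integer $n\ge3$ there exist finite rooted binary trees $T_1,T_2$, each with $n$ nodes, such that the right-arm rotation distance between them satisfies $d_{RA}(T_1,T_2)=2n-2$.
   Context: Trees: finite rooted binary trees, each internal vertex (node) having a left and a right child. The right arm consists of the root and all nodes reachable from the root by a path of right edges. Right rotation at a node $N$ whose left child $M$ is a node (with $A,B$ the left and right subtrees of $M$, $C$ the right subtree of $N$) replaces the subtree at $N$ by one whose root has left subtree $A$ and right child a node with left subtree $B$ and right subtree $C$; left rotation at $N$ is the inverse operation. The right-arm rotation distance $d_{RA}(T_1,T_2)$ is the minimal number of rotations, each performed at a node on the right arm, needed to transform $T_1$ into $T_2$. *)

(* Defs.v *)
From Stdlib Require Import Arith Lia.

(* Finite rooted binary trees: a [Node] is an internal vertex with a left and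
   a right child; [Leaf] is an external (empty) position. *)
Inductive tree : Type :=
| Leaf : tree
| Node : tree -> tree -> tree.

Fixpoint nodes (t : tree) : nat :=
  match t with
  | Leaf => 0
  | Node l r => nodes l + nodes r + 1
  end.

Inductive rot_right_root : tree -> tree -> Prop :=
| RRR : forall A B C, rot_right_root (Node (Node A B) C) (Node A (Node B C)).

(* One rotation (right rotation or its inverse, the left rotation) performed
   at a node on the right arm: either at the root, or at a node of the right
   arm of the root's right subtree. *)
Inductive ra_step : tree -> tree -> Prop :=
| ra_right_root : forall t t', rot_right_root t t' -> ra_step t t'
| ra_left_root  : forall t t', rot_right_root t' t -> ra_step t t'
| ra_down : forall l r r', ra_step r r' -> ra_step (Node l r) (Node l r').

Inductive ra_steps : nat -> tree -> tree -> Prop :=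
| ra_refl : forall t, ra_steps 0 t t
| ra_cons : forall k t u v, ra_step t u -> ra_steps k u v -> ra_steps (S k) t v.

Definition ra_dist (t1 t2 : tree) (d : nat) : Prop :=
  ra_steps d t1 t2 /\ (forall k, ra_steps k t1 t2 -> d <= k).

(* Main.v *)
Require Import Defs.
From Stdlib Require Import Arith Lia ZArith.

Fixpoint armk (t : tree) : nat := match t with Leaf => 0 | Node _ r => S (armk r) end.
Fixpoint sp (t : tree) : nat := match t with Leaf => 0 | Node _ r => S (sp r) end.
Fixpoint lastsp (t : tree) : nat :=
  match t with
  | Leaf => 0
  | Node l Leaf => sp l
  | Node _ r => lastsp r
  end.
Definition cc (t : tree) : Z :=
  match t with
  | Node l Leaf => if Nat.ltb (sp l) (nodes l) then 2%Z else 0%Z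
  | _ => 0%Z
  end.
Definition phi0 (t : tree) : Z := (- Z.of_nat (armk t) - 2 * Z.of_nat (lastsp t))%Z.
Definition phi (t : tree) : Z := (phi0 t + cc t)%Z.

Lemma step_nodes : forall t t', ra_step t t' -> (exists a b, t = Node a b) /\ (exists a b, t' = Node a b).
Proof.
  intros t t' H; destruct H as [t t' H|t t' H|l r r' H].
  - destruct H; split; eauto.
  - destruct H; split; eauto.
  - split; eauto.
Qed.

Lemma phi0_step : forall t t', ra_step t t' -> (Z.abs (phi0 t - phi0 t') <= 1)%Z.
Proof.
  intros t0 t0' H0; induction H0 as [t t' H|t t' H|l r r' H IH].
  - destruct H as [A B C]; unfold phi0; destruct C; cbn [armk lastsp sp nodes Nat.ltb cc phi0]; lia.
  - destruct H as [A B C]; unfold phi0; destruct C; cbn [armk lastsp sp nodes Nat.ltb cc phi0]; lia.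
  - destruct (step_nodes _ _ H) as [[a [b E]] [a' [b' E']]]; subst.
    unfold phi0 in *; cbn [armk lastsp sp nodes Nat.ltb cc phi0] in *. lia.
Qed.

Lemma phi_step : forall t t', ra_step t t' -> (Z.abs (phi t - phi t') <= 1)%Z.
Proof.
  intros t t' H; pose proof (phi0_step _ _ H) as H0; unfold phi.
  destruct H as [t t' H|t t' H|l r r' H].
  - destruct H as [A B C]; unfold phi0 in *; destruct C; cbn [armk lastsp sp nodes Nat.ltb cc phi0] in *;
      [destruct (Nat.ltb _ _)|]; lia.
  - destruct H as [A B C]; unfold phi0 in *; destruct C; cbn [armk lastsp sp nodes Nat.ltb cc phi0] in *;
      [destruct (Nat.ltb _ _)|]; lia.
  - destruct (step_nodes _ _ H) as [[a [b E]] [a' [b' E']]]; subst; cbn [armk lastsp sp nodes Nat.ltb cc phi0]. lia.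
Qed.

Lemma phi_steps : forall k t u, ra_steps k t u -> (phi t - phi u <= Z.of_nat k)%Z.
Proof.
  intros k t u H; induction H; [lia|].
  pose proof (phi_step _ _ H); lia.
Qed.

Lemma steps_trans : forall a b t u v, ra_steps a t u -> ra_steps b u v -> ra_steps (a + b) t v.
Proof.
  intros a b t u v H; induction H; intros; simpl; auto.
  econstructor; eauto.
Qed.

Fixpoint rc (m : nat) : tree := match m with 0 => Leaf | S m => Node Leaf (rc m) end.
Fixpoint lc (m : nat) : tree := match m with 0 => Leaf | S m => Node (lc m) Leaf end.
Fixpoint G (a b : nat) : tree := match a with 0 => Node (rc b) Leaf | S a => Node Leaf (G a b) end.

Lemma phase1 : forall j i, ra_steps j (Node (lc j) (rc i)) (rc (S (j + i))).
Proof.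
  induction j; intros i.
  - constructor.
  - change (lc (S j)) with (Node (lc j) Leaf). econstructor.
    + apply ra_right_root. apply (RRR (lc j) Leaf (rc i)).
    + replace (S (S j + i)) with (S (j + S i)) by lia. apply (IHj (S i)).
Qed.

Lemma step_G : forall a b, ra_step (G (S a) b) (G a (S b)).
Proof.
  induction a; intros b; simpl.
  - apply ra_left_root. apply (RRR Leaf (rc b) Leaf).
  - apply ra_down. apply IHa.
Qed.

Lemma phase2 : forall a b, ra_steps a (G a b) (G 0 (a + b)).
Proof.
  induction a; intros b.
  - constructor.
  - econstructor; [apply step_G|]. replace (S a + b) with (a + S b) by lia. apply IHa.
Qed.

Lemma rc_G : forall a, rc (S a) = G a 0.
Proof. induction a; simpl; auto. rewrite <- IHa. reflexivity. Qed.

Lemma nodes_rc : forall m, nodes (rc m) = m.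
Proof. induction m; simpl; lia. Qed.
Lemma nodes_lc : forall m, nodes (lc m) = m.
Proof. induction m; simpl; lia. Qed.
Lemma sp_rc : forall m, sp (rc m) = m.
Proof. induction m; simpl; lia. Qed.

Theorem theorem4p1 : forall n : nat, 3 <= n ->
  exists T1 T2 : tree, nodes T1 = n /\ nodes T2 = n /\ ra_dist T1 T2 (2 * n - 2).
Proof.
  intros n Hn. destruct n as [|m]; [lia|].
  exists (Node (lc m) Leaf), (Node (rc m) Leaf).
  split; [simpl; rewrite nodes_lc; lia|].
  split; [simpl; rewrite nodes_rc; lia|].
  split.
  - replace (2 * S m - 2) with (m + m) by lia.
    apply steps_trans with (u := rc (S m)).
    + pose proof (phase1 m 0) as H. replace (S (m + 0)) with (S m) in H by lia. exact H.
    + rewrite rc_G. pose proof (phase2 m 0) as H. replace (m + 0) with m in H by lia. exact H.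
  - intros k H. apply phi_steps in H.
    unfold phi, phi0, cc in H. cbn [armk lastsp sp nodes] in H. rewrite sp_rc, nodes_rc in H.
    rewrite Nat.ltb_irrefl in H.
    destruct m as [|[|m]]; [lia|lia|]. cbn [armk lastsp sp nodes lc] in H.
    rewrite nodes_lc in H.
    replace (Nat.ltb 1 (m + 0 + 1 + 0 + 1)) with true in H
      by (symmetry; apply Nat.ltb_lt; lia).
    lia.
Qed.
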